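(* For $\lambda>0$ and $k\in\{0,1,2,\ldots\}$ let $p_k(\lambda)=\frac{\lambda^k}{k!}e^{-\lambda}$, and let $(q_k(\lambda))_{k\ge0}$ be the sequence $(p_k(\lambda))_{k\ge0}$ rearranged in non-increasing order (equal terms are kept with their multiplicities). Then for each $n\ge0$ the function $S_n(\lambda)=\sum_{k=0}^n q_k(\lambda)$ is strictly decreasing on $(0,+\infty)$.
   Context: $p_k(\lambda)$ are the probabilities of the Poisson distribution with parameter $\lambda$. Since $p_k(\lambda)\to0$ as $k\to\infty$, the non-increasing rearrangement $(q_k(\lambda))_{k\ge0}$ is well defined: $q_0(\lambda)\ge q_1(\lambda)\ge\cdots$ and $(q_k(\lambda))$ is a permutation of $(p_k(\lambda))$. *)

(* Defs.v *)
From Stdlib Require Import Arith Reals Lra ClassicalEpsilon.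
Open Scope R_scope.

Definition poisson_p (lam : R) (k : nat) : R :=
  lam ^ k / INR (Factorial.fact k) * exp (- lam).

Definition is_noninc_rearrangement (p q : nat -> R) : Prop :=
  exists sigma : nat -> nat,
    (forall i j, sigma i = sigma j -> i = j) /\
    (forall m, exists k, sigma k = m) /\
    (forall k, q k = p (sigma k)) /\
    (forall k, q (S k) <= q k).

(* The non-increasing rearrangement (q_k(lambda))_k, chosen by Hilbert's
   epsilon; its values are uniquely determined whenever it exists. *)
Definition poisson_q (lam : R) : nat -> R :=
  epsilon (inhabits (fun _ : nat => 0))
          (fun q => is_noninc_rearrangement (poisson_p lam) q).

(* S_n(lambda) = q_0 + ... + q_n  (sum_f_R0 f n has n+1 terms). *)
Definition poisson_S (n : nat) (lam : R) : R :=
  sum_f_R0 (poisson_q lam) n.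

(* Main.v *)
Require Import Defs.
From Stdlib Require Import Reals.
From Stdlib Require Import Reals Lra Lia List FinFun Classical ClassicalEpsilon ZArith.
From Coquelicot Require Import Coquelicot.
Open Scope R_scope.

Definition sumL (l : list R) : R := fold_right Rplus 0 l.

Lemma sumL_app l1 l2 : sumL (l1 ++ l2) = sumL l1 + sumL l2.
Proof. induction l1; simpl; [lra|]. unfold sumL in *; simpl; rewrite IHl1; lra. Qed.

Lemma sum_f_seq (f : nat -> R) n : sum_f_R0 f n = sumL (map f (seq 0 (S n))).
Proof.
  induction n. - simpl. unfold sumL; simpl; lra.
  - replace (sum_f_R0 f (S n)) with (sum_f_R0 f n + f (S n)) by reflexivity.
    rewrite (seq_S (S n)), map_app, sumL_app, <- IHn. replace (sumL (map f ((0 + S n)%nat :: nil))) with (f (S n)) by (unfold sumL; simpl; ring). lra.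
Qed.

Section Top.
Variable q : nat -> R.
Hypothesis Hq : forall k, q (S k) <= q k.

Lemma q_anti a b : (a <= b)%nat -> q b <= q a.
Proof. induction 1; [lra|]. specialize (Hq m); lra. Qed.

Lemma top_sum L : forall l, NoDup l -> length l = L -> sumL (map q l) <= sumL (map q (seq 0 L)).
Proof.
  induction L as [|L IH]; intros l Hn Hl.
  - destruct l; [simpl; lra| discriminate].
  - destruct (classic (exists x, In x l /\ (L <= x)%nat)) as [[x [Hx Hxl]]|Hno].
    + destruct (in_split _ _ Hx) as [l1 [l2 E]]. subst l.
      assert (Hn' := NoDup_remove_1 _ _ _ Hn).
      rewrite length_app in Hl; simpl in Hl.
      assert (IH' := IH (l1 ++ l2) Hn' ltac:(rewrite length_app; lia)).
      rewrite map_app, sumL_app in *. rewrite seq_S, map_app, sumL_app.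
      pose proof (q_anti _ _ Hxl). simpl map. 
      replace (sumL (q x :: map q l2)) with (q x + sumL (map q l2)) by reflexivity.
      replace (sumL (q (0 + L)%nat :: nil)) with (q L) by (unfold sumL; simpl; ring).
      assert (sumL (q L :: nil) = q L) as -> by (unfold sumL; simpl; ring). lra.
    + exfalso. assert (incl l (seq 0 L)).
      { intros x Hx. apply in_seq. split; [lia|]. destruct (Nat.lt_ge_cases x L); auto.
        exfalso; apply Hno; eauto. }
      pose proof (NoDup_incl_length Hn H). rewrite length_seq in H0. lia.
Qed.
End Top.

Section Rearr.
Variables p q : nat -> R.
Hypothesis H : is_noninc_rearrangement p q.

Lemma rearr_max n l : NoDup l -> length l = S n -> sumL (map p l) <= sum_f_R0 q n.
Proof.
  destruct H as [s [Hi [Hs [Hqs Hmon]]]].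
  intros Hn Hl.
  assert (exists l', map s l' = l) as [l' E].
  { clear Hn Hl. induction l as [|a l IHl]. exists nil; reflexivity.
    destruct IHl as [l' E]. destruct (Hs a) as [k Hk]. exists (k :: l'); simpl; congruence. }
  subst l. rewrite map_map. rewrite sum_f_seq.
  rewrite (map_ext (fun x => p (s x)) q) by (intros; symmetry; auto).
  apply top_sum; auto. eapply NoDup_map_inv; eauto. rewrite length_map in Hl; auto.
Qed.

Lemma rearr_att n : exists l, NoDup l /\ length l = S n /\ sum_f_R0 q n = sumL (map p l).
Proof.
  destruct H as [s [Hi [Hs [Hqs Hmon]]]].
  exists (map s (seq 0 (S n))). split; [|split].
  - apply Injective_map_NoDup; [exact Hi| apply seq_NoDup].
  - rewrite length_map, length_seq; auto.
  - rewrite sum_f_seq, map_map. f_equal. apply map_ext; auto.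
Qed.
End Rearr.

Section Merge.
Variable p : nat -> R.
Variable M : nat.
Hypothesis Hinc : forall k, (k < M)%nat -> p k <= p (S k).
Hypothesis Hdec : forall k, (M < k)%nat -> p (S k) <= p k.
Hypothesis Hlim : exists N, forall k, (N <= k)%nat -> p k < p 0%nat.

Definition pickL (s : nat * nat) : bool :=
  match fst s with
  | O => false
  | S c' => if Rle_dec (p (snd s)) (p c') then true else false
  end.
Definition step (s : nat * nat) : nat * nat :=
  if pickL s then (pred (fst s), snd s) else (fst s, S (snd s)).
Fixpoint st (m : nat) : nat * nat :=
  match m with O => (S M, S M) | S m' => step (st m') end.
Definition sg (m : nat) : nat :=
  if pickL (st m) then pred (fst (st m)) else snd (st m).

Lemma pickL_fst s : pickL s = true -> fst s <> O.
Proof. unfold pickL. destruct (fst s); [discriminate| lia]. Qed.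

Lemma st_inv m : (fst (st m) <= S M /\ S M <= snd (st m) /\
   (S M - fst (st m)) + (snd (st m) - S M) = m)%nat.
Proof.
  induction m; [simpl; lia|]. cbn [st]. unfold step.
  destruct (st m) as [c r]. cbn [fst snd] in *.
  destruct (pickL (c, r)) eqn:E; cbn [fst snd].
  - apply pickL_fst in E. simpl in E. destruct c as [|c]; [congruence|]. cbn [pred]. lia.
  - lia.
Qed.

Lemma st_mono i j : (i <= j)%nat -> (fst (st j) <= fst (st i) /\ snd (st i) <= snd (st j))%nat.
Proof.
  induction 1; [lia|]. simpl. unfold step. destruct (st m) as [c r]. simpl in *.
  destruct (pickL (c, r)); cbn [fst snd]; [destruct c; cbn [pred]|]; lia.
Qed.

Lemma sg_in m : (fst (st (S m)) <= sg m < snd (st (S m)))%nat.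
Proof.
  pose proof (st_inv m). simpl. unfold step, sg.
  destruct (st m) as [c r]. simpl in *.
  destruct (pickL (c, r)) eqn:E; cbn [fst snd].
  - apply pickL_fst in E. simpl in E. destruct c as [|c]; [congruence|]. cbn [pred]. lia.
  - lia.
Qed.

Lemma sg_out m : ~ (fst (st m) <= sg m < snd (st m))%nat.
Proof.
  unfold sg. destruct (st m) as [c r]. simpl.
  destruct (pickL (c, r)) eqn:E.
  - apply pickL_fst in E. simpl in E. destruct c as [|c]; [congruence|]. cbn [pred fst snd] in *. lia.
  - lia.
Qed.

Lemma sg_inj i j : sg i = sg j -> i = j.
Proof.
  intros E.
  assert (forall a b, (a < b)%nat -> sg a <> sg b).
  { intros a b Hab Hs. pose proof (sg_in a). pose proof (st_mono (S a) b Hab).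
    apply (sg_out b). lia. }
  destruct (Nat.lt_total i j) as [h|[h|h]]; auto.
  - exfalso; eapply H; eauto.
  - exfalso; eapply H; eauto.
Qed.

Lemma sg_cover m v : (fst (st m) <= v < snd (st m))%nat -> exists k, sg k = v.
Proof.
  revert v. induction m; intros v Hv.
  - simpl in Hv. lia.
  - destruct (classic (fst (st m) <= v < snd (st m))%nat) as [h|h]; [now apply IHm|].
    exists m. pose proof (st_inv m). simpl in Hv. unfold step in Hv. unfold sg.
    destruct (st m) as [c r]. simpl in *.
    destruct (pickL (c, r)) eqn:E; cbn [fst snd] in Hv.
    + apply pickL_fst in E. simpl in E. destruct c as [|c]; [congruence|]. cbn [pred] in *. lia.
    + lia.
Qed.

Lemma left_ge k : (k <= M)%nat -> p 0%nat <= p k.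
Proof.
  induction k; intros; [lra|]. specialize (Hinc k ltac:(lia)). specialize (IHk ltac:(lia)). lra.
Qed.

Lemma sg_surj v : exists k, sg k = v.
Proof.
  destruct Hlim as [N HN].
  set (R1 := Nat.max N (S M)).
  assert (Inv : forall m, fst (st m) = O \/ (snd (st m) <= R1)%nat).
  { induction m. simpl. right. unfold R1; lia.
    pose proof (st_inv m). simpl. unfold step.
    destruct (pickL (st m)) eqn:E; simpl.
    - destruct IHm; [left; rewrite H0; reflexivity| right; lia].
    - destruct IHm as [h|h]; [left; lia|].
      destruct (Nat.eq_dec (snd (st m)) R1) as [e|e]; [|right; lia].
      unfold pickL in E. destruct (fst (st m)) as [|c] eqn:Ec; [|].
      + left; reflexivity.
      + exfalso. destruct (Rle_dec (p (snd (st m))) (p c)) as [_|n]; [discriminate|].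
        apply n. pose proof (HN (snd (st m)) ltac:(unfold R1 in e; lia)).
        pose proof (left_ge c ltac:(lia)). lra. }
  set (m := (R1 + v + 1)%nat).
  pose proof (st_inv m). destruct (Inv m) as [h|h].
  - apply (sg_cover m). lia.
  - exfalso. unfold R1 in *. lia.
Qed.

Lemma sg_noninc k : p (sg (S k)) <= p (sg k).
Proof.
  pose proof (st_inv k).
  unfold sg. cbn [st].
  destruct (st k) as [c r]. cbn [fst snd] in H.
  unfold step, pickL. destruct c as [|[|c'']]; cbn [fst snd pred];
  repeat (destruct Rle_dec; cbn [fst snd pred]);
  first [lra | apply Hdec; lia | apply Hinc; lia].
Qed.

Lemma sg_sum m : sumL (map (fun k => p (sg k)) (seq 0 m)) =
  sumL (map p (seq (fst (st m)) (snd (st m) - fst (st m)))).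
Proof.
  induction m.
  - simpl. rewrite Nat.sub_diag. reflexivity.
  - rewrite seq_S, map_app, sumL_app, IHm, Nat.add_0_l. cbn [st map].
    pose proof (st_inv m). unfold sg, step.
    destruct (st m) as [c r]. cbn [fst snd] in *.
    destruct (pickL (c, r)) eqn:E; cbn [fst snd].
    + apply pickL_fst in E. simpl in E. destruct c as [|c']; [lia|]. cbn [pred].
      replace (r - c')%nat with (S (r - S c')) by lia. cbn [seq map].
      unfold sumL; cbn [fold_right]. lra.
    + replace (S r - c)%nat with (S (r - c)) by lia. rewrite (seq_S (r - c)), map_app, sumL_app.
      replace (c + (r - c))%nat with r by lia. unfold sumL; cbn [fold_right map]. lra.
Qed.

Lemma merge_exists : exists q, is_noninc_rearrangement p q /\
  forall n, exists c, sum_f_R0 q n = sumL (map p (seq c (S n))).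
Proof.
  exists (fun k => p (sg k)). split.
  - exists sg. split; [exact sg_inj|]. split; [exact sg_surj|]. split; [reflexivity|].
    exact sg_noninc.
  - intros n. exists (fst (st (S n))). rewrite sum_f_seq, sg_sum.
    pose proof (st_inv (S n)). do 2 f_equal. f_equal. lia.
Qed.
End Merge.



Definition pm1 (k : nat) (t : R) : R := match k with O => 0 | S j => poisson_p t j end.

Lemma p_derive k t : is_derive (fun t => poisson_p t k) t (pm1 k t - poisson_p t k).
Proof.
  unfold poisson_p. destruct k as [|j].
  - simpl. auto_derive; auto. field.
  - unfold pm1. auto_derive; auto.
    change (match j with 0%nat => 1 | S _ => INR j + 1 end) with (INR (S j)).
    change (Factorial.fact j + j * Factorial.fact j)%nat with (Factorial.fact (S j)).
    unfold poisson_p. rewrite fact_simpl, mult_INR. 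
    pose proof (INR_fact_neq_0 j). pose proof (pos_INR j). rewrite S_INR. simpl pow. field. split; auto. lra.
Qed.

Definition gg (n m : nat) (t : R) : R := sumL (map (poisson_p t) (seq m (S n))).

Lemma sum_derive len : forall m t,
  is_derive (fun t => sumL (map (poisson_p t) (seq m len))) t (pm1 m t - pm1 (m + len) t).
Proof.
  induction len; intros m t.
  - simpl. rewrite Nat.add_0_r. eapply is_derive_ext with (f := fun _ => 0).
    + intros; reflexivity.
    + replace (pm1 m t - pm1 m t) with 0 by ring. auto_derive; auto.
  - cbn [seq map]. 
    eapply is_derive_ext with (f := fun t => poisson_p t m + sumL (map (poisson_p t) (seq (S m) len))).
    + intros; reflexivity.
    + replace (pm1 m t - pm1 (m + S len) t) with
        ((pm1 m t - poisson_p t m) + (pm1 (S m) t - pm1 (S m + len) t)).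
      * apply (is_derive_plus (fun t => poisson_p t m)); [apply p_derive| apply IHlen].
      * rewrite Nat.add_succ_r. simpl. ring.
Qed.

Lemma p_pos t k : 0 < t -> 0 < poisson_p t k.
Proof.
  intros. unfold poisson_p. apply Rmult_lt_0_compat; [|apply exp_pos].
  apply Rdiv_lt_0_compat; [apply pow_lt; auto| apply INR_fact_lt_0].
Qed.

Lemma pS t k : poisson_p t (S k) = poisson_p t k * t / INR (S k).
Proof.
  unfold poisson_p. rewrite fact_simpl, mult_INR. simpl pow.
  pose proof (INR_fact_neq_0 k). pose proof (pos_INR k). rewrite S_INR. field. split; auto. lra.
Qed.

Lemma p_ratio t j d : poisson_p t (j + d) =
  poisson_p t j * (t ^ d * (INR (Factorial.fact j) / INR (Factorial.fact (j + d)))).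
Proof.
  unfold poisson_p. rewrite pow_add.
  pose proof (INR_fact_neq_0 j). pose proof (INR_fact_neq_0 (j + d)). field. auto.
Qed.

Lemma pow_strict a b d : 0 < a < b -> a ^ S d < b ^ S d.
Proof.
  intros [Ha Hab]. induction d.
  - simpl; lra.
  - change (a ^ S (S d)) with (a * a ^ S d). change (b ^ S (S d)) with (b * b ^ S d).
    pose proof (pow_lt a (S d) Ha). nra.
Qed.

Lemma cond_strict j d a x : 0 < a -> a < x ->
  poisson_p a j <= poisson_p a (j + S d) -> poisson_p x j < poisson_p x (j + S d).
Proof.
  intros Ha Hax H. rewrite p_ratio in H |- *.
  set (K := INR (Factorial.fact j) / INR (Factorial.fact (j + S d))) in *.
  assert (0 < K) by (apply Rdiv_lt_0_compat; apply INR_fact_lt_0).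
  pose proof (p_pos a j Ha). pose proof (p_pos x j ltac:(lra)).
  assert (1 <= a ^ S d * K).
  { apply Rmult_le_reg_l with (poisson_p a j); auto. lra. }
  pose proof (pow_strict a x d ltac:(lra)).
  assert (1 < x ^ S d * K) by nra. nra.
Qed.

Lemma gg_shift n j t : gg n (S j) t = gg n j t - poisson_p t j + poisson_p t (j + S n).
Proof.
  unfold gg.
  assert (E : sumL (map (poisson_p t) (seq j (S (S n)))) = poisson_p t j + sumL (map (poisson_p t) (seq (S j) (S n)))) by reflexivity.
  rewrite (seq_S (S n) j), map_app, sumL_app in E. cbn [map] in E.
  unfold sumL at 2 in E. cbn [fold_right] in E. lra.
Qed.

Lemma gg_derivR n m t : derivable_pt_lim (gg n m) t (pm1 m t - poisson_p t (m + n)).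
Proof.
  apply is_derive_Reals. unfold gg.
  replace (poisson_p t (m + n)) with (pm1 (m + S n) t) by (rewrite Nat.add_succ_r; reflexivity).
  apply sum_derive.
Qed.

Lemma g0_dec n x y : 0 < x -> x < y -> gg n 0 y < gg n 0 x.
Proof.
  intros Hx Hxy. destruct (MVT_cor2 (gg n 0) (fun t => pm1 0 t - poisson_p t (0 + n)) x y Hxy)
    as [c [Hc Hc2]].
  { intros; apply gg_derivR. }
  simpl in Hc. pose proof (p_pos c n ltac:(lra)). nra.
Qed.

Lemma gS_dec n j a b : 0 < a -> a < b -> poisson_p a j <= poisson_p a (j + S n) ->
  gg n (S j) b < gg n (S j) a.
Proof.
  intros Ha Hab H. destruct (MVT_cor2 (gg n (S j)) (fun t => pm1 (S j) t - poisson_p t (S j + n)) a b Hab)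
    as [c [Hc Hc2]].
  { intros; apply gg_derivR. }
  simpl pm1 in Hc. pose proof (cond_strict j n a c Ha (proj1 Hc2) H).
  replace (S j + n)%nat with (j + S n)%nat in Hc by lia. nra.
Qed.

Definition condm (n m : nat) (y : R) : Prop :=
  match m with O => True | S j => poisson_p y j <= poisson_p y (j + S n) end.

Lemma cont_f n j : continuity (fun t => poisson_p t (j + S n) - poisson_p t j).
Proof.
  intros x. apply derivable_continuous_pt.
  exists ((pm1 (j + S n) x - poisson_p x (j + S n)) - (pm1 j x - poisson_p x j)).
  unfold derivable_pt_abs. apply is_derive_Reals.
  apply (is_derive_minus (fun t => poisson_p t (j + S n)) (fun t => poisson_p t j)); apply p_derive.
Qed.

Lemma eq_cond n i z : 0 < z -> poisson_p z (S i) = poisson_p z (S i + S n) ->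
  poisson_p z i <= poisson_p z (i + S n).
Proof.
  intros Hz E. replace (S i + S n)%nat with (S (i + S n)) in E by lia.
  rewrite !pS in E. set (A := poisson_p z i) in *. set (B := poisson_p z (i + S n)) in *.
  assert (0 < A) by (apply p_pos; auto).
  assert (0 < INR (S i)) by (apply lt_0_INR; lia).
  assert (INR (S i) <= INR (S (i + S n))) by (apply le_INR; lia).
  assert (0 < INR (S (i + S n))) by lra.
  assert (A * INR (S (i + S n)) = B * INR (S i)).
  { apply Rmult_eq_reg_l with (z / (INR (S i) * INR (S (i + S n)))).
    - field_simplify in E; [|lra|lra]. field_simplify; [|lra|lra]. lra.
    - apply Rgt_not_eq. apply Rdiv_lt_0_compat; nra. }
  nra.
Qed.

Lemma P3 n m : forall x y, 0 < x -> x < y -> condm n m y -> exists j', gg n m y < gg n j' x.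
Proof.
  induction m as [|j IH]; intros x y Hx Hxy C.
  - exists 0%nat. apply g0_dec; auto.
  - simpl in C.
    destruct (Rle_dec (poisson_p x j) (poisson_p x (j + S n))) as [Cx|Cx].
    + exists (S j). apply gS_dec; auto.
    + assert (exists z, x < z <= y /\ poisson_p z j = poisson_p z (j + S n)) as [z [Hz Ez]].
      { destruct (Req_dec (poisson_p y j) (poisson_p y (j + S n))) as [e|e].
        - exists y; split; [lra|auto].
        - destruct (IVT _ x y (cont_f n j) Hxy) as [z [Hz Ez]]; [lra|lra|].
          exists z. assert (z <> x) by (intro; subst; lra). split; [lra|]. lra. }
      assert (gg n (S j) y <= gg n (S j) z).
      { destruct (Req_dec z y) as [->|ne]; [lra|].
        left. apply gS_dec; [lra|lra|lra]. }
      assert (gg n (S j) z = gg n j z) by (rewrite gg_shift; lra).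
      assert (condm n j z).
      { destruct j as [|i]; simpl; auto. apply eq_cond; [lra|]. exact Ez. }
      destruct (IH x z Hx ltac:(lra) H1) as [j' Hj']. exists j'. lra.
Qed.

Lemma mode_exists t : 0 < t -> exists M : nat, INR M <= t < INR M + 1.
Proof.
  intros Ht. destruct (archimed t) as [H1 H2].
  assert (0 < up t)%Z by (apply lt_0_IZR; lra).
  exists (Z.to_nat (up t - 1)). rewrite INR_IZR_INZ, Z2Nat.id by lia.
  rewrite minus_IZR. simpl. lra.
Qed.

Lemma poisson_merge t : 0 < t -> exists q, is_noninc_rearrangement (poisson_p t) q /\
  forall n, exists c, sum_f_R0 q n = sumL (map (poisson_p t) (seq c (S n))).
Proof.
  intros Ht. destruct (mode_exists t Ht) as [M HM].
  apply (merge_exists (poisson_p t) M).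
  - intros k Hk. rewrite pS. pose proof (p_pos t k Ht).
    assert (INR (S k) <= INR M) by (apply le_INR; lia).
    assert (0 < INR (S k)) by (apply lt_0_INR; lia).
    apply Rmult_le_reg_r with (INR (S k)); auto. field_simplify; [|lra]. nra.
  - intros k Hk. rewrite pS. pose proof (p_pos t k Ht).
    assert (INR M + 1 <= INR (S k)) by (rewrite <- S_INR; apply le_INR; lia).
    assert (0 < INR (S k)) by (apply lt_0_INR; lia).
    apply Rmult_le_reg_r with (INR (S k)); auto. field_simplify; [|lra]. nra.
  - destruct (cv_speed_pow_fact t 1 ltac:(lra)) as [N HN]. exists N. intros k Hk.
    specialize (HN k Hk). unfold Rdist in HN. rewrite Rminus_0_r in HN.
    unfold poisson_p. simpl. rewrite Rdiv_1_r, Rmult_1_l.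
    pose proof (exp_pos (- t)). apply Rabs_def2 in HN. nra.
Qed.

Lemma S_char n t : 0 < t ->
  (forall m, gg n m t <= poisson_S n t) /\ exists c, poisson_S n t = gg n c t.
Proof.
  intros Ht. destruct (poisson_merge t Ht) as [q [Hq Hc]].
  assert (Hr : is_noninc_rearrangement (poisson_p t) (poisson_q t)).
  { unfold poisson_q. apply epsilon_spec. eauto. }
  unfold poisson_S. split.
  - intros m. unfold gg. apply (rearr_max _ _ Hr n); [apply seq_NoDup| apply length_seq].
  - destruct (Hc n) as [c Ec]. exists c. unfold gg. apply Rle_antisym.
    + destruct (rearr_att _ _ Hr n) as [l [Hl1 [Hl2 El]]]. rewrite El, <- Ec.
      apply (rearr_max _ _ Hq n); auto.
    + apply (rearr_max _ _ Hr n); [apply seq_NoDup| apply length_seq].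
Qed.

Theorem lemma1 : forall (n : nat) (x y : R),
  0 < x -> x < y -> poisson_S n y < poisson_S n x.
Proof.
  intros n x y Hx Hxy.
  destruct (S_char n y ltac:(lra)) as [Hy [c Ec]].
  destruct (S_char n x Hx) as [Hxm _].
  assert (condm n c y).
  { destruct c as [|j]; simpl; auto.
    pose proof (Hy j). rewrite Ec, gg_shift in H. lra. }
  destruct (P3 n c x y Hx Hxy H) as [j' Hj']. specialize (Hxm j'). lra.
Qed.
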